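(* Let $\varepsilon\in(0,1/256]$, let $\mathcal S=\{S_1,\dots,S_K,S_\infty\}$ be an $(\varepsilon,c)$-ordered family, and let $\rho\in\{1,\dots,\lceil1/\varepsilon\rceil\}^K$. Let $x^*$ be an extreme point of $P(\mathcal S,\rho)$ and suppose that, whenever $x^*$ has a fractional component in $S_h$ with $h\in[K]$, one has $c_{\max,h}/c_{\min,h}\le(1+\varepsilon)^{d_h}$ for some $d_h\le\min\{h,\lceil2\sqrt{C_\varepsilon}\rceil\}$. Then $x^*$ can be rounded to an integral vector $\bar x\in P(\mathcal S,\rho)\cap\{0,1\}^n$ with $c^T\bar x\le(1+2\varepsilon)\,c^Tx^*$.
   Context: Minimum Knapsack data: $n$ items with costs $c\in\mathbb{R}^n_{\ge0}$, weights $w\in\mathbb{R}^n_{\ge0}$, target $b$; items are indexed so that $1=c_1\ge c_2\ge\dots\ge c_n$. $C_\varepsilon=\lceil\log_{1+\varepsilon}(1/\varepsilon)\rceil$. For a family $\mathcal S=\{S_1,\dots,S_K,S_\infty\}$ of pairwise disjoint subsets of $\{2,\dots,n\}$ and $\rho\in\{1,\dots,\lceil1/\varepsilon\rceil\}^K$, $P(\mathcal S,\rho)$ is the set of $x\in\mathbb{R}^n$ with: $x_1=1$; $w^Tx\ge b$; $\sum_{i\in S_k}x_i=\rho_k$ for $k\in[K]$ with $\rho_k<\lceil1/\varepsilon\rceil$; $\sum_{i\in S_k}x_i\ge\rho_k$ for $k\in[K]$ with $\rho_k=\lceil1/\varepsilon\rceil$; $x_i=0$ for $i\in\{2,\dots,n\}\setminus\bigcup_{k\in[K]\cup\{\infty\}}S_k$;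 $0\le x_i\le1$ for $i\in\bigcup_{k\in[K]\cup\{\infty\}}S_k$. Let $c_{\min,k}=\min_{i\in S_k}c_i$ and $c_{\max,k}=\max_{i\in S_k}c_i$ for $k\in[K]$. The family $\mathcal S$ is $(\varepsilon,c)$-ordered if (a) $c_{\min,k}\ge c_{\max,k+1}$ for all $k\in[K-1]$, and (b) $\min\{c_{\min,K},\varepsilon\}\ge\max_{i\in S_\infty}c_i$. *)

(* Defs.v *)
From Stdlib Require Import Reals Lra Lia.
Open Scope R_scope.

(* ceiling of a real, as an integer: ceil x = - floor (- x), floor y = up y - 1 *)
Definition ceilZ (x : R) : Z := (1 - up (- x))%Z.

Definition Nceil (eps : R) : nat := Z.to_nat (ceilZ (/ eps)).

Definition Ceps (eps : R) : Z := ceilZ (ln (/ eps) / ln (1 + eps)).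

Definition Dbound (eps : R) : nat := Z.to_nat (ceilZ (2 * sqrt (IZR (Ceps eps)))).

(* rsum f m = f 1 + ... + f m  (items are indexed 1..n) *)
Fixpoint rsum (f : nat -> R) (m : nat) : R :=
  match m with
  | O => 0
  | S m' => rsum f m' + f m
  end.

(* Vectors are functions nat -> R, only coordinates 1..n matter.
   The family S = {S_1,...,S_K,S_inf}: S k (for 1 <= k <= K) and Sinf, as
   boolean predicates on item indices. *)

Definition covered (K : nat) (S : nat -> nat -> bool) (Sinf : nat -> bool) (i : nat) : Prop :=
  (exists k, (1 <= k <= K)%nat /\ S k i = true) \/ Sinf i = true.

Definition setsum (n : nat) (Sk : nat -> bool) (x : nat -> R) : R :=
  rsum (fun i => if Sk i then x i else 0) n.

Definition inP (eps : R) (n : nat) (w : nat -> R) (b : R) (K : nat)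
    (S : nat -> nat -> bool) (Sinf : nat -> bool) (rho : nat -> nat) (x : nat -> R) : Prop :=
  x 1%nat = 1 /\
  rsum (fun i => w i * x i) n >= b /\
  (forall k, (1 <= k <= K)%nat ->
     ((rho k < Nceil eps)%nat -> setsum n (S k) x = INR (rho k)) /\
     (rho k = Nceil eps -> setsum n (S k) x >= INR (rho k))) /\
  (forall i, (2 <= i <= n)%nat -> ~ covered K S Sinf i -> x i = 0) /\
  (forall i, (2 <= i <= n)%nat -> covered K S Sinf i -> 0 <= x i <= 1).

Definition extreme_point (eps : R) (n : nat) (w : nat -> R) (b : R) (K : nat)
    (S : nat -> nat -> bool) (Sinf : nat -> bool) (rho : nat -> nat) (x : nat -> R) : Prop :=
  inP eps n w b K S Sinf rho x /\
  forall (y z : nat -> R) (lam : R),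
    inP eps n w b K S Sinf rho y -> inP eps n w b K S Sinf rho z ->
    0 < lam < 1 ->
    (forall i, (1 <= i <= n)%nat -> x i = lam * y i + (1 - lam) * z i) ->
    forall i, (1 <= i <= n)%nat -> y i = z i.

Definition valid_family (n K : nat) (S : nat -> nat -> bool) (Sinf : nat -> bool) : Prop :=
  (forall k i, (1 <= k <= K)%nat -> S k i = true -> (2 <= i <= n)%nat) /\
  (forall i, Sinf i = true -> (2 <= i <= n)%nat) /\
  (forall k l i, (1 <= k <= K)%nat -> (1 <= l <= K)%nat -> k <> l ->
      S k i = true -> S l i = true -> False) /\
  (forall k i, (1 <= k <= K)%nat -> S k i = true -> Sinf i = true -> False).

(* (eps,c)-ordered: (a) c_min,k >= c_max,k+1; (b) min{c_min,K, eps} >= max_{S_inf} c,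
   written out elementwise. *)
Definition eps_c_ordered (eps : R) (c : nat -> R) (K : nat)
    (S : nat -> nat -> bool) (Sinf : nat -> bool) : Prop :=
  (forall k i j, (1 <= k)%nat -> (k + 1 <= K)%nat ->
     S k i = true -> S (k + 1)%nat j = true -> c j <= c i) /\
  (forall j, Sinf j = true ->
     c j <= eps /\ (forall i, (1 <= K)%nat -> S K i = true -> c j <= c i)).

(* Main.v *)
Require Import Defs.
From Stdlib Require Import Reals Lra Lia Classical Arith ZArith.
Open Scope R_scope.

Lemma rsum_ext n f g : (forall i, (1<=i<=n)%nat -> f i = g i) -> rsum f n = rsum g n.
Proof. induction n; simpl; intros H; auto. rewrite IHn by (intros; apply H; lia). rewrite H by lia. auto. Qed.

Lemma rsum_plus n f g : rsum (fun i => f i + g i) n = rsum f n + rsum g n.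
Proof. induction n; simpl; [lra|]. rewrite IHn; lra. Qed.

Lemma rsum_scal n a f : rsum (fun i => a * f i) n = a * rsum f n.
Proof. induction n; simpl; [lra|]. rewrite IHn; lra. Qed.

Lemma rsum_minus n f g : rsum (fun i => f i - g i) n = rsum f n - rsum g n.
Proof. induction n; simpl; [lra|]. rewrite IHn; lra. Qed.

Lemma rsum_le n f g : (forall i, (1<=i<=n)%nat -> f i <= g i) -> rsum f n <= rsum g n.
Proof. induction n; simpl; intros H; [lra|]. assert (H1:=H (S n) ltac:(lia)). assert (rsum f n <= rsum g n) by (apply IHn; intros; apply H; lia). lra. Qed.

Lemma rsum_zero n f : (forall i, (1<=i<=n)%nat -> f i = 0) -> rsum f n = 0.
Proof. intros H. rewrite (rsum_ext n f (fun _ => 0)) by auto. clear H. induction n; simpl; lra. Qed.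

Lemma rsum_upd n f j v : (1<=j<=n)%nat ->
  rsum (fun i => if Nat.eqb i j then v else f i) n = rsum f n + (v - f j).
Proof.
  induction n; intros Hj; [lia|]. cbn [rsum].
  destruct (Nat.eq_dec j (S n)).
  - subst. destruct (Nat.eqb_spec (S n) (S n)); [|lia].
    rewrite (rsum_ext n _ f). lra. intros i Hi. destruct (Nat.eqb_spec i (S n)); [lia|auto].
  - rewrite IHn by lia. destruct (Nat.eqb_spec (S n) j); [lia|]. lra.
Qed.

Lemma rsum_exch n m (g : nat -> nat -> R) :
  rsum (fun i => rsum (fun k => g k i) m) n = rsum (fun k => rsum (fun i => g k i) n) m.
Proof.
  revert n. induction m; intros n; simpl.
  - apply rsum_zero; auto.
  - rewrite rsum_plus. rewrite IHm. auto.
Qed.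

Lemma rsum_01 n f : (forall i, (1<=i<=n)%nat -> f i = 0 \/ f i = 1) -> exists m, rsum f n = INR m.
Proof.
  induction n; intros H; simpl. exists O; simpl; auto.
  destruct IHn as [m Hm]. intros; apply H; lia.
  destruct (H (S n) ltac:(lia)) as [E|E]; rewrite E, Hm.
  exists m; lra. exists (S m); rewrite S_INR; lra.
Qed.

Lemma rsum_single n j v : (1<=j<=n)%nat -> rsum (fun i => if Nat.eqb i j then v else 0) n = v.
Proof. intros Hj. rewrite (rsum_upd n (fun _ => 0) j v Hj). rewrite rsum_zero; auto. lra. Qed.

Lemma fin_t (P : nat -> R -> Prop) m :
  (forall i t t', 0 < t' <= t -> P i t -> P i t') ->
  (forall i, (i <= m)%nat -> exists t, 0 < t /\ P i t) ->
  exists t, 0 < t /\ forall i, (i <= m)%nat -> P i t.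
Proof.
  intros Hmon. induction m; intros H.
  - destruct (H O ltac:(lia)) as [t [Ht Pt]]. exists t; split; auto.
    intros i Hi. replace i with O by lia. auto.
  - destruct IHm as [t [Ht Pt]]. intros; apply H; lia.
    destruct (H (S m) ltac:(lia)) as [t' [Ht' Pt']].
    exists (Rmin t t'). split. apply Rmin_pos; auto.
    intros i Hi. destruct (Nat.eq_dec i (S m)).
    + subst. apply Hmon with t'; auto. split. apply Rmin_pos; auto. apply Rmin_r.
    + apply Hmon with t. split. apply Rmin_pos; auto. apply Rmin_l. apply Pt; lia.
Qed.

Lemma setsum_lin n G x d s :
  setsum n G (fun i => x i + s * d i) = setsum n G x + s * setsum n G d.
Proof.
  unfold setsum. rewrite <- rsum_scal, <- rsum_plus. apply rsum_ext; intros; destruct (G i); lra.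
Qed.

Lemma pert eps n w b K S Sinf rho x d :
  (1 <= n)%nat -> extreme_point eps n w b K S Sinf rho x ->
  (forall i, (1<=i<=n)%nat -> d i <> 0 -> 0 < x i < 1) ->
  rsum (fun i => w i * d i) n = 0 ->
  (forall k, (1<=k<=K)%nat -> setsum n (S k) x = INR (rho k) -> setsum n (S k) d = 0) ->
  forall i, (1<=i<=n)%nat -> d i = 0.
Proof.
  intros Hn [HP Hex] Hd Hwd Hsd.
  pose proof HP as [H1 [Hw [Hg [Hu Hb]]]].
  destruct (fin_t (fun i t => (1<=i<=n)%nat -> d i <> 0 -> t * Rabs (d i) <= x i /\ t * Rabs (d i) <= 1 - x i) n)
    as [t1 [Ht1 P1]].
  { intros i t t' Ht Hp Hi Hdi. destruct (Hp Hi Hdi). pose proof (Rabs_pos (d i)).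
    split; nra. }
  { intros i _. destruct (classic ((1<=i<=n)%nat /\ d i <> 0)) as [[Hi Hdi]|Hno].
    - pose proof (Hd i Hi Hdi). pose proof (Rabs_pos_lt _ Hdi).
      exists (Rmin (x i) (1 - x i) / Rabs (d i)). split.
      apply Rdiv_lt_0_compat; auto. apply Rmin_pos; lra.
      intros _ _. unfold Rdiv. rewrite Rmult_assoc, Rinv_l by lra. rewrite Rmult_1_r.
      split; [apply Rmin_l| apply Rmin_r].
    - exists 1. split; [lra|]. intros Hi Hdi; exfalso; tauto. }
  destruct (fin_t (fun k t => (1<=k<=K)%nat -> rho k = Nceil eps -> setsum n (S k) x <> INR (rho k) ->
       t * Rabs (setsum n (S k) d) <= setsum n (S k) x - INR (rho k)) K)
    as [t2 [Ht2 P2]].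
  { intros k t t' Ht Hp Hk Hr Hne. specialize (Hp Hk Hr Hne). pose proof (Rabs_pos (setsum n (S k) d)). nra. }
  { intros k _. destruct (classic ((1<=k<=K)%nat /\ rho k = Nceil eps /\ setsum n (S k) x <> INR (rho k))) as [[Hk [Hr Hne]]|Hno].
    - destruct (Hg k Hk) as [_ Hge]. specialize (Hge Hr).
      assert (Hgt : setsum n (S k) x - INR (rho k) > 0) by (destruct Hge as [G|G]; [lra| contradiction]).
      destruct (Req_dec (setsum n (S k) d) 0) as [E|E].
      + exists 1. split; [lra|]. intros. rewrite E, Rabs_R0. lra.
      + pose proof (Rabs_pos_lt _ E). exists ((setsum n (S k) x - INR (rho k)) / Rabs (setsum n (S k) d)).
        split. apply Rdiv_lt_0_compat; lra.
        intros _ _ _. unfold Rdiv. rewrite Rmult_assoc, Rinv_l by lra. lra.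
    - exists 1. split; [lra|]. intros; exfalso; tauto. }
  set (t := Rmin t1 t2).
  assert (Ht : 0 < t) by (apply Rmin_pos; auto).
  assert (Htt1 : t <= t1) by apply Rmin_l. assert (Htt2 : t <= t2) by apply Rmin_r.
  assert (Hd1 : d 1%nat = 0).
  { destruct (Req_dec (d 1%nat) 0); auto. pose proof (Hd 1%nat ltac:(lia) H). lra. }
  assert (HPs : forall s, Rabs s <= t -> inP eps n w b K S Sinf rho (fun i => x i + s * d i)).
  { intros s Hs. pose proof (Rabs_pos s). split; [|split; [|split; [|split]]].
    - rewrite H1, Hd1. lra.
    - rewrite (rsum_ext n _ (fun i => w i * x i + s * (w i * d i))) by (intros; ring).
      rewrite rsum_plus, rsum_scal, Hwd. lra.
    - intros k Hk. rewrite setsum_lin. destruct (Hg k Hk) as [Ha Hb'].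
      destruct (classic (setsum n (S k) x = INR (rho k))) as [E|E].
      + rewrite (Hsd k Hk E), E. split; intros; lra.
      + split.
        * intros Hlt. exfalso. apply E; auto.
        * intros Hr. pose proof (P2 k ltac:(lia) Hk Hr E).
          pose proof (Rabs_pos (setsum n (S k) d)).
          assert (s * setsum n (S k) d >= - (t * Rabs (setsum n (S k) d))).
          { assert (Rabs (s * setsum n (S k) d) <= t * Rabs (setsum n (S k) d)).
            rewrite Rabs_mult. apply Rmult_le_compat_r; auto.
            pose proof (Rle_abs (- (s * setsum n (S k) d))) as HH. rewrite Rabs_Ropp in HH. lra. }
          pose proof (P2 k ltac:(lia) Hk Hr E). nra.
    - intros i Hi Hc. rewrite (Hu i Hi Hc).
      destruct (Req_dec (d i) 0) as [E|E]. rewrite E; lra.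
      pose proof (Hd i ltac:(lia) E). pose proof (Hu i Hi Hc). lra.
    - intros i Hi Hc. destruct (Req_dec (d i) 0) as [E|E]. rewrite E. pose proof (Hb i Hi Hc); lra.
      destruct (P1 i ltac:(lia) ltac:(lia) E).
      assert (Rabs (s * d i) <= t * Rabs (d i)).
      { rewrite Rabs_mult. apply Rmult_le_compat_r; auto. apply Rabs_pos. }
      pose proof (Rle_abs (- (s * d i))) as HH. rewrite Rabs_Ropp in HH. pose proof (Rle_abs (s * d i)).
      pose proof (Rabs_pos (d i)).
      assert (t * Rabs (d i) <= t1 * Rabs (d i)) by nra. lra. }
  assert (HPp := HPs t ltac:(rewrite Rabs_right; lra)).
  assert (HPm := HPs (-t) ltac:(rewrite Rabs_Ropp, Rabs_right; lra)).
  intros i Hi.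
  pose proof (Hex _ _ (1/2) HPp HPm ltac:(lra) ltac:(intros; lra) i Hi). simpl in H.
  nra.
Qed.

Lemma ceil_bounds x : x <= IZR (ceilZ x) < x + 1.
Proof.
  unfold ceilZ. rewrite minus_IZR. destruct (archimed (- x)) as [H1 H2]. simpl. lra.
Qed.

Lemma INR_to_nat z : (0 <= z)%Z -> INR (Z.to_nat z) = IZR z.
Proof. intros H. rewrite INR_IZR_INZ, Z2Nat.id; auto. Qed.

Lemma INR_to_nat_le z y : IZR z < y -> 0 <= y -> INR (Z.to_nat z) <= y.
Proof.
  intros H Hy. destruct (Z_le_gt_dec 0 z).
  rewrite INR_to_nat by lia; lra. destruct z; try lia. rewrite Z2Nat.inj_neg. simpl; lra.
Qed.

Lemma Nceil_ge eps : 0 < eps -> / eps <= INR (Nceil eps).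
Proof.
  intros He. unfold Nceil. pose proof (ceil_bounds (/ eps)) as [H1 H2].
  pose proof (Rinv_0_lt_compat _ He).
  rewrite INR_to_nat. lra. apply le_IZR; lra.
Qed.

Lemma ln_le_sub1 z : 0 < z -> ln z <= z - 1.
Proof. intros Hz. pose proof (exp_ineq1_le (ln z)). rewrite exp_ln in H; lra. Qed.

Lemma epsL eps : 0 < eps <= 1/256 -> eps * ln (/ eps) <= 3/64.
Proof.
  intros He. set (y := / eps). assert (Hy : 256 <= y).
  { unfold y. replace 256 with (/ (1/256)) by field. apply Rinv_le_contravar; lra. }
  assert (Hey : eps * y = 1) by (unfold y; field; lra).
  set (r := sqrt (sqrt y)).
  assert (Hs : sqrt y * sqrt y = y) by (apply sqrt_sqrt; lra).
  assert (Hsp : 0 <= sqrt y) by apply sqrt_pos.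
  assert (Hr : r * r = sqrt y) by (apply sqrt_sqrt; auto).
  assert (Hrp : 0 <= r) by apply sqrt_pos.
  assert (Hr4 : r ^ 4 = y) by (rewrite <- Hs, <- Hr; ring).
  assert (H16 : 16 <= sqrt y).
  { destruct (Rlt_le_dec (sqrt y) 16); auto. assert (sqrt y * sqrt y < 16 * 16) by nra. lra. }
  assert (Hr44 : 4 <= r).
  { destruct (Rlt_le_dec r 4); auto. assert (r * r < 4 * 4) by nra. lra. }
  assert (Hln : ln y = 4 * ln r).
  { rewrite <- Hr4, ln_pow by lra. simpl; ring. }
  pose proof (ln_le_sub1 r ltac:(lra)).
  rewrite Hln.
  assert (eps * (4 * ln r) <= eps * (4 * (r - 1))) by (apply Rmult_le_compat_l; lra).
  assert (eps * (4 * (r - 1)) <= 3/64).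
  { assert (4 * (r - 1) <= 3/64 * r^4) by nra.
    assert (eps * (4 * (r - 1)) <= eps * (3/64 * r^4)) by (apply Rmult_le_compat_l; lra).
    rewrite Hr4 in H2. nra. }
  lra.
Qed.

Lemma ln1eps eps : 0 < eps -> eps / (1 + eps) <= ln (1 + eps).
Proof.
  intros He. pose proof (ln_le_sub1 (/ (1 + eps)) ltac:(apply Rinv_0_lt_compat; lra)).
  rewrite ln_Rinv in H by lra.
  assert (/ (1 + eps) - 1 = - (eps / (1 + eps))) by (field; lra). lra.
Qed.

Lemma Dbound_small eps : 0 < eps <= 1/256 -> eps * INR (Dbound eps) <= 1/2.
Proof.
  intros He.
  set (L := ln (/ eps)). set (A := L / ln (1 + eps)).
  pose proof (epsL eps He) as HL. fold L in HL.
  pose proof (ln1eps eps ltac:(lra)) as Hl1.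
  assert (Hlp : 0 < ln (1 + eps)). { assert (0 < eps / (1 + eps)) by (apply Rdiv_lt_0_compat; lra). lra. }
  assert (HA : eps * eps * A <= eps * L * (1 + eps)).
  { unfold A. assert (0 <= L).
    { unfold L. rewrite ln_Rinv by lra. assert (ln eps < ln 1) by (apply ln_increasing; lra). rewrite ln_1 in H; lra. }
    apply Rmult_le_reg_r with (ln (1 + eps)); auto.
    unfold Rdiv. replace (eps * eps * (L * / ln (1 + eps)) * ln (1 + eps)) with (eps * eps * L) by (field; lra).
    assert (eps / (1 + eps) * (1 + eps) = eps) by (field; lra).
    assert (eps * L * (1 + eps) * (eps / (1+eps)) <= eps * L * (1 + eps) * ln (1 + eps)).
    { apply Rmult_le_compat_l; auto. apply Rmult_le_pos; [apply Rmult_le_pos|]; lra. }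
    nra. }
  unfold Dbound. fold (Ceps eps).
  pose proof (ceil_bounds A) as [_ HC]. unfold Ceps in *. fold L A.
  set (C := IZR (ceilZ A)) in *.
  set (s := sqrt C).
  assert (Hes : eps * s <= 11/50).
  { destruct (Rle_dec C 0). unfold s. rewrite sqrt_neg_0 by auto. lra.
    assert (Hss : s * s = C) by (apply sqrt_sqrt; lra).
    assert (0 <= s) by apply sqrt_pos.
    assert (eps * eps * C <= eps * eps * (A + 1)) by (apply Rmult_le_compat_l; nra).
    assert ((eps * s) * (eps * s) <= (11/50) * (11/50)) by nra.
    assert (0 <= eps * s) by nra. nra. }
  pose proof (ceil_bounds (2 * s)) as [_ HD].
  assert (0 <= s) by apply sqrt_pos.
  assert (INR (Z.to_nat (ceilZ (2 * s))) <= 2 * s + 1) by (apply INR_to_nat_le; lra).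
  assert (eps * INR (Z.to_nat (ceilZ (2 * s))) <= eps * (2 * s + 1)) by (apply Rmult_le_compat_l; lra).
  lra.
Qed.

Lemma pow_bound eps m : 0 < eps -> eps * INR m <= 1/2 -> (1+eps)^m <= 1 + 2*eps*INR m.
Proof.
  intros He. induction m; intros Hm. simpl; lra.
  rewrite S_INR in *. assert (eps * INR m <= 1/2) by lra. specialize (IHm H).
  simpl. pose proof (pos_INR m). assert (0 < 1 + eps) by lra.
  assert ((1 + eps) * (1 + eps) ^ m <= (1 + eps) * (1 + 2 * eps * INR m)) by (apply Rmult_le_compat_l; lra).
  nra.
Qed.

Lemma rsum_mul_upd n f x j v : (1<=j<=n)%nat ->
  rsum (fun i => f i * (if Nat.eqb i j then v else x i)) n = rsum (fun i => f i * x i) n + f j * (v - x j).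
Proof.
  intros Hj. rewrite (rsum_ext n _ (fun i => if Nat.eqb i j then f j * v else f i * x i)).
  rewrite rsum_upd by auto. ring.
  intros i _. destruct (Nat.eqb_spec i j); subst; auto.
Qed.

Lemma setsum_upd n G x j v : (1<=j<=n)%nat ->
  setsum n G (fun i => if Nat.eqb i j then v else x i) = setsum n G x + (if G j then v - x j else 0).
Proof.
  intros Hj. unfold setsum.
  rewrite (rsum_ext n _ (fun i => if Nat.eqb i j then (if G j then v else 0) else (if G i then x i else 0))).
  rewrite rsum_upd by auto. destruct (G j); ring.
  intros i _. destruct (Nat.eqb_spec i j); subst; auto.
Qed.

Lemma rsum_const m a : rsum (fun _ => a) m = INR m * a.
Proof. induction m; simpl rsum. simpl; ring. rewrite IHm, S_INR. ring. Qed.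

Lemma pw_groups (S : nat -> nat -> bool) K g i m : (m <= K)%nat ->
  (forall k l, (1<=k<=K)%nat -> (1<=l<=K)%nat -> k <> l -> S k i = true -> S l i = true -> False) ->
  rsum (fun k => if S k i then g else 0) m = 0 \/
  (rsum (fun k => if S k i then g else 0) m = g /\ exists k, (1<=k<=m)%nat /\ S k i = true).
Proof.
  intros Hm Hdis. induction m; simpl rsum. left; auto.
  destruct IHm as [E|[E [k [Hk Hs]]]]; [lia| |].
  - destruct (S (Datatypes.S m) i) eqn:Es. right. split. lra. exists (Datatypes.S m); split; auto; lia. left; lra.
  - destruct (S (Datatypes.S m) i) eqn:Es. exfalso. apply (Hdis k (Datatypes.S m)); auto; lia.
    right; split. lra. exists k; split; auto; lia.
Qed.

Lemma rsum_mul_upd2 n f x j1 v1 j2 v2 : j1 <> j2 -> (1<=j1<=n)%nat -> (1<=j2<=n)%nat ->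
  rsum (fun i => f i * (if Nat.eqb i j2 then v2 else if Nat.eqb i j1 then v1 else x i)) n
  = rsum (fun i => f i * x i) n + f j1 * (v1 - x j1) + f j2 * (v2 - x j2).
Proof.
  intros Hne H1 H2.
  rewrite (rsum_mul_upd n f (fun i => if Nat.eqb i j1 then v1 else x i) j2 v2 H2).
  rewrite (rsum_mul_upd n f x j1 v1 H1).
  destruct (Nat.eqb_spec j2 j1); [lia|]. ring.
Qed.

Lemma setsum_upd2 n G x j1 v1 j2 v2 : j1 <> j2 -> (1<=j1<=n)%nat -> (1<=j2<=n)%nat ->
  setsum n G (fun i => if Nat.eqb i j2 then v2 else if Nat.eqb i j1 then v1 else x i)
  = setsum n G x + (if G j1 then v1 - x j1 else 0) + (if G j2 then v2 - x j2 else 0).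
Proof.
  intros Hne H1 H2.
  rewrite (setsum_upd n G (fun i => if Nat.eqb i j1 then v1 else x i) j2 v2 H2).
  rewrite (setsum_upd n G x j1 v1 H1).
  destruct (Nat.eqb_spec j2 j1); [lia|]. ring.
Qed.

Definition e (j : nat) : nat -> R := fun i => if Nat.eqb i j then 1 else 0.

Lemma setsum_e n G j : (1<=j<=n)%nat -> setsum n G (e j) = if G j then 1 else 0.
Proof.
  intros Hj. unfold setsum, e.
  rewrite (rsum_ext n _ (fun i => if Nat.eqb i j then (if G j then 1 else 0) else 0)).
  apply rsum_single; auto.
  intros i _. destruct (Nat.eqb_spec i j); subst; destruct (G j); auto; destruct (G i); auto.
Qed.

Lemma setsum_minus n G f g : setsum n G (fun i => f i - g i) = setsum n G f - setsum n G g.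
Proof. unfold setsum. rewrite <- rsum_minus. apply rsum_ext; intros; destruct (G i); lra. Qed.

Lemma setsum_comb n G f g a b0 : setsum n G (fun i => a * f i + b0 * g i) = a * setsum n G f + b0 * setsum n G g.
Proof. unfold setsum. rewrite <- !rsum_scal, <- rsum_plus. apply rsum_ext; intros; destruct (G i); lra. Qed.

Lemma nat_gap1 p q : 0 < INR p - INR q < 1 -> False.
Proof.
  intros H. destruct (Compare_dec.le_lt_dec p q) as [L|L].
  apply le_INR in L; lra.
  destruct (Nat.eq_dec p (S q)). subst; rewrite S_INR in H; lra.
  assert (L2 : (q + 2 <= p)%nat) by lia. apply le_INR in L2. rewrite plus_INR in L2. simpl in L2. lra.
Qed.

Lemma nat_gap2 p q : 0 < INR p - INR q < 2 -> INR p - INR q = 1.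
Proof.
  intros H. destruct (Compare_dec.le_lt_dec p q) as [L|L].
  apply le_INR in L; lra.
  destruct (Nat.eq_dec p (S q)). subst; rewrite S_INR; lra.
  assert (L2 : (q + 2 <= p)%nat) by lia. apply le_INR in L2. rewrite plus_INR in L2. simpl in L2. lra.
Qed.

Ltac elim_eqb := repeat match goal with |- context [Nat.eqb ?a ?b] => destruct (Nat.eqb_spec a b) end; try lia; try lra.

Section Main.
Variables (n : nat) (c w : nat -> R) (b eps : R) (K : nat)
    (S : nat -> nat -> bool) (Sinf : nat -> bool) (rho : nat -> nat) (xs : nat -> R).
Hypothesis (Hn : (1 <= n)%nat)
    (Hc1 : c 1%nat = 1)
    (Hcdec : forall i, (1 <= i)%nat -> (i + 1 <= n)%nat -> c (i + 1)%nat <= c i)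
    (Hc0 : forall i, (1 <= i <= n)%nat -> 0 <= c i)
    (Hw0 : forall i, (1 <= i <= n)%nat -> 0 <= w i)
    (Heps : 0 < eps <= 1 / 256)
    (Hfam : valid_family n K S Sinf)
    (Hord : eps_c_ordered eps c K S Sinf)
    (Hrho : forall k, (1 <= k <= K)%nat -> (1 <= rho k <= Nceil eps)%nat)
    (Hext : extreme_point eps n w b K S Sinf rho xs).

Local Notation frac i := (0 < xs i < 1).
Local Notation tight k := (setsum n (S k) xs = INR (rho k)).
Definition loose j := Sinf j = true \/ exists k, (1<=k<=K)%nat /\ S k j = true /\ ~ tight k.
Definition okdir (d : nat -> R) := (forall i, (1<=i<=n)%nat -> d i <> 0 -> frac i) /\
   (forall k, (1<=k<=K)%nat -> tight k -> setsum n (S k) d = 0).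

Lemma F0 : inP eps n w b K S Sinf rho xs.
Proof. apply Hext. Qed.

Lemma Fnn i : (1<=i<=n)%nat -> 0 <= xs i.
Proof.
  intros Hi. destruct F0 as [H1 [_ [_ [Hu Hb]]]].
  destruct (Nat.eq_dec i 1). subst; lra.
  destruct (classic (covered K S Sinf i)). apply (Hb i ltac:(lia) H).
  rewrite (Hu i ltac:(lia) H); lra.
Qed.

Lemma Fint i : (1<=i<=n)%nat -> ~ frac i -> xs i = 0 \/ xs i = 1.
Proof.
  intros Hi Hf. destruct F0 as [H1 [_ [_ [Hu Hb]]]].
  destruct (Nat.eq_dec i 1). subst; auto.
  destruct (classic (covered K S Sinf i)).
  - pose proof (Hb i ltac:(lia) H). destruct (Req_dec (xs i) 0); auto.
    destruct (Req_dec (xs i) 1); auto. exfalso; apply Hf; lra.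
  - left. apply (Hu i ltac:(lia) H).
Qed.

Lemma Fclass i : (1<=i<=n)%nat -> frac i ->
  loose i \/ exists h, (1<=h<=K)%nat /\ S h i = true /\ tight h.
Proof.
  intros Hi Hf. destruct F0 as [H1 [_ [_ [Hu Hb]]]].
  destruct (Nat.eq_dec i 1). subst; lra.
  destruct (classic (covered K S Sinf i)) as [[[k [Hk Hs]]|Hs]|Hc].
  - destruct (classic (tight k)). right; eauto. left; right; eauto.
  - left; left; auto.
  - rewrite (Hu i ltac:(lia) Hc) in Hf; lra.
Qed.

Lemma okdir_e j : (1<=j<=n)%nat -> frac j -> loose j -> okdir (e j).
Proof.
  intros Hj Hf Hl. destruct Hfam as [_ [_ [Hdis Hdis2]]]. split.
  - intros i Hi. unfold e. destruct (Nat.eqb_spec i j). subst; auto. intros C; lra.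
  - intros k Hk Ht. rewrite setsum_e by auto. destruct (S k j) eqn:E; auto.
    exfalso. destruct Hl as [Hl|[k' [Hk' [Hs Hnt]]]].
    + eapply Hdis2; eauto.
    + destruct (Nat.eq_dec k k'). subst; auto. eapply Hdis; eauto.
Qed.

Lemma okdir_ee a a' h : (1<=a<=n)%nat -> (1<=a'<=n)%nat -> (1<=h<=K)%nat -> frac a -> frac a' ->
  S h a = true -> S h a' = true -> okdir (fun i => e a i - e a' i).
Proof.
  intros Ha Ha' Hh Hf Hf' Hs Hs'. destruct Hfam as [_ [_ [Hdis Hdis2]]]. split.
  - intros i Hi. unfold e. destruct (Nat.eqb_spec i a); subst; auto.
    destruct (Nat.eqb_spec i a'); subst; auto. intros C; lra.
  - intros k Hk Ht. rewrite setsum_minus, !setsum_e by auto.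
    destruct (Nat.eq_dec k h). subst. rewrite Hs, Hs'; lra.
    destruct (S k a) eqn:E1. exfalso; eapply Hdis with (k:=k) (l:=h); eauto.
    destruct (S k a') eqn:E2. exfalso; eapply Hdis with (k:=k) (l:=h); eauto. lra.
Qed.

Lemma twodir u v p q : okdir u -> okdir v -> (1<=p<=n)%nat -> (1<=q<=n)%nat ->
  u p <> 0 -> v p = 0 -> v q <> 0 -> u q = 0 -> False.
Proof.
  intros [Hu1 Hu3] [Hv1 Hv3] Hp Hq Hup Hvp Hvq Huq.
  set (Wu := rsum (fun i => w i * u i) n). set (Wv := rsum (fun i => w i * v i) n).
  destruct (classic (Wv = 0 /\ Wu = 0)) as [[E1 E2]|Hne].
  - apply Hup. apply (pert eps n w b K S Sinf rho xs u); auto.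
  - assert (HH := pert eps n w b K S Sinf rho xs (fun i => Wv * u i + (- Wu) * v i) Hn Hext).
    assert (Hz : forall i, (1<=i<=n)%nat -> Wv * u i + - Wu * v i = 0).
    { apply HH.
      - intros i Hi Hne'. destruct (Req_dec (u i) 0) as [E|E]. rewrite E in Hne'.
        apply Hv1; auto. intros C; apply Hne'; rewrite C; ring. apply Hu1; auto.
      - rewrite (rsum_ext n _ (fun i => Wv * (w i * u i) + (- Wu) * (w i * v i))) by (intros; ring).
        rewrite rsum_plus, !rsum_scal. fold Wu Wv. ring.
      - intros k Hk Ht. rewrite setsum_comb, Hu3, Hv3 by auto. ring. }
    pose proof (Hz p Hp) as Zp. pose proof (Hz q Hq) as Zq.
    rewrite Hvp in Zp. rewrite Huq in Zq.
    apply Hne. split.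
    + assert (Wv * u p = 0) by lra. apply Rmult_integral in H; destruct H; [auto|lra].
    + assert (Wu * v q = 0) by lra. apply Rmult_integral in H; destruct H; [auto|lra].
Qed.

Lemma sum_split1 h a : (1<=a<=n)%nat -> S h a = true ->
  setsum n (S h) xs = rsum (fun i => if Nat.eqb i a then 0 else if S h i then xs i else 0) n + xs a.
Proof.
  intros Ha Hs. unfold setsum. rewrite rsum_upd by auto. rewrite Hs. lra.
Qed.

Lemma other_frac h a : (1<=h<=K)%nat -> tight h -> (1<=a<=n)%nat -> S h a = true -> frac a ->
  exists a', (1<=a'<=n)%nat /\ a' <> a /\ S h a' = true /\ frac a'.
Proof.
  intros Hh Ht Ha Hs Hf. apply NNPP. intros Hno.
  destruct (rsum_01 n (fun i => if Nat.eqb i a then 0 else if S h i then xs i else 0)) as [m Hm].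
  { intros i Hi. destruct (Nat.eqb_spec i a); auto. destruct (S h i) eqn:E; auto.
    apply Fint; auto. intros Hfi. apply Hno. exists i; auto. }
  rewrite (sum_split1 h a Ha Hs), Hm in Ht. apply (nat_gap1 (rho h) m). lra.
Qed.

Lemma pair_sum h a a' : (1<=h<=K)%nat -> tight h -> (1<=a<=n)%nat -> (1<=a'<=n)%nat -> a <> a' ->
  S h a = true -> S h a' = true -> frac a -> frac a' ->
  (forall i, (1<=i<=n)%nat -> i <> a -> i <> a' -> ~ frac i) -> xs a + xs a' = 1.
Proof.
  intros Hh Ht Ha Ha' Hne Hs Hs' Hf Hf' Hno.
  destruct (rsum_01 n (fun i => if Nat.eqb i a' then 0 else if Nat.eqb i a then 0 else if S h i then xs i else 0)) as [m Hm].
  { intros i Hi. destruct (Nat.eqb_spec i a'); auto. destruct (Nat.eqb_spec i a); auto. destruct (S h i) eqn:E; auto.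
    apply Fint; auto. }
  rewrite (sum_split1 h a Ha Hs) in Ht.
  rewrite rsum_upd in Hm by auto. rewrite Hs' in Hm.
  destruct (Nat.eqb_spec a' a); [lia|].
  assert (E : INR (rho h) - INR m = xs a + xs a') by lra.
  rewrite <- E. apply nat_gap2. lra.
Qed.

Lemma loose_unique j : (1<=j<=n)%nat -> frac j -> loose j ->
  forall i, (1<=i<=n)%nat -> i <> j -> ~ frac i.
Proof.
  intros Hj Hf Hl i Hi Hne Hfi. pose proof Hfam as [_ [_ [Hdis Hdis2]]].
  destruct (Fclass i Hi Hfi) as [Hli|[h [Hh [Hs Ht]]]].
  - apply (twodir (e j) (e i) j i); try apply okdir_e; auto; unfold e;
    elim_eqb.
  - destruct (other_frac h i Hh Ht Hi Hs Hfi) as [i' [Hi' [Hne' [Hs' Hfi']]]].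
    assert (Hji' : j <> i').
    { intros ->. destruct Hl as [Hl|[k [Hk [Hsk Hnt]]]]. eapply Hdis2; eauto.
      destruct (Nat.eq_dec k h). subst; auto. eapply Hdis; eauto. }
    apply (twodir (e j) (fun x => e i x - e i' x) j i); try apply okdir_e; auto.
    apply (okdir_ee i i' h); auto.
    all: unfold e;
    elim_eqb.
Qed.

Lemma tight_unique j j' h : (1<=j<=n)%nat -> (1<=j'<=n)%nat -> (1<=h<=K)%nat -> j <> j' ->
  S h j = true -> S h j' = true -> frac j -> frac j' ->
  forall i, (1<=i<=n)%nat -> i <> j -> i <> j' -> ~ frac i.
Proof.
  intros Hj Hj' Hh Hne Hs Hs' Hf Hf' i Hi Hij Hij' Hfi. pose proof Hfam as [_ [_ [Hdis Hdis2]]].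
  destruct (Fclass i Hi Hfi) as [Hli|[h' [Hh' [Hsi Ht]]]].
  - apply (loose_unique i Hi Hfi Hli j Hj); auto.
  - destruct (Nat.eq_dec h' h).
    + subst h'. apply (twodir (fun x => e j x - e j' x) (fun x => e j x - e i x) j' i).
      apply (okdir_ee j j' h); auto. apply (okdir_ee j i h); auto. all: auto.
      all: unfold e;
      elim_eqb.
    + destruct (other_frac h' i Hh' Ht Hi Hsi Hfi) as [i' [Hi' [Hne' [Hs2 Hfi']]]].
      assert (Hji' : j <> i'). { intros ->. eapply (Hdis h h'); eauto. }
      apply (twodir (fun x => e j x - e j' x) (fun x => e i x - e i' x) j i).
      apply (okdir_ee j j' h); auto. apply (okdir_ee i i' h'); auto. all: auto.
      all: unfold e;
      elim_eqb.
Qed.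

Lemma Lc1 i : (1<=i<=n)%nat -> c i <= 1.
Proof.
  induction i; intros Hi; [lia|]. destruct (Nat.eq_dec i 0). subst; lra.
  replace (Datatypes.S i) with (i + 1)%nat by lia. pose proof (Hcdec i ltac:(lia) ltac:(lia)).
  pose proof (IHi ltac:(lia)). lra.
Qed.

Lemma Lcx i : (1<=i<=n)%nat -> 0 <= c i * xs i.
Proof. intros Hi. apply Rmult_le_pos; [apply Hc0|apply Fnn]; auto. Qed.

Lemma Lgroup_le k : rsum (fun i => if S k i then c i * xs i else 0) n <= rsum (fun i => c i * xs i) n.
Proof. apply rsum_le. intros i Hi. destruct (S k i); [lra|apply Lcx; auto]. Qed.

Lemma Lgroup_ge k m : (forall i, S k i = true -> m <= c i) ->
  m * setsum n (S k) xs <= rsum (fun i => if S k i then c i * xs i else 0) n.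
Proof.
  intros H. unfold setsum. rewrite <- rsum_scal. apply rsum_le. intros i Hi.
  destruct (S k i) eqn:E; [|lra]. pose proof (H i E). pose proof (Fnn i Hi). nra.
Qed.

Lemma Lset_ge k : (1<=k<=K)%nat -> INR (rho k) <= setsum n (S k) xs.
Proof.
  intros Hk. destruct F0 as [_ [_ [Hg _]]]. destruct (Hg k Hk) as [H1 H2].
  destruct (Hrho k Hk). destruct (Nat.eq_dec (rho k) (Nceil eps)).
  specialize (H2 e0); lra. rewrite H1 by lia; lra.
Qed.

Lemma Lset_ge1 k : (1<=k<=K)%nat -> 1 <= setsum n (S k) xs.
Proof. intros Hk. pose proof (Lset_ge k Hk). destruct (Hrho k Hk). apply le_INR in H0. simpl in H0. lra. Qed.

Lemma Lnonempty k : (1<=k<=K)%nat -> exists i, S k i = true.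
Proof.
  intros Hk. apply NNPP; intros Hno. pose proof (Lset_ge1 k Hk). unfold setsum in H.
  rewrite rsum_zero in H. lra. intros i _. destruct (S k i) eqn:E; auto. exfalso; apply Hno; eauto.
Qed.

Lemma Lchain h lose : (1<=h<=K)%nat -> S h lose = true ->
  forall m k, (k + m + 1 = h)%nat -> (1 <= k)%nat -> forall i, S k i = true -> c lose <= c i.
Proof.
  intros Hh Hl. destruct Hord as [Ha _]. induction m; intros k Hk H1 i Hi.
  - apply (Ha k i lose); auto. lia. replace (k+1)%nat with h by lia; auto.
  - destruct (Lnonempty (k+1) ltac:(lia)) as [j Hj].
    pose proof (IHm (k+1)%nat ltac:(lia) ltac:(lia) j Hj). pose proof (Ha k i j H1 ltac:(lia) Hi Hj). lra.
Qed.

Lemma Ldecomp m : (m <= K)%nat ->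
  c 1%nat * xs 1%nat + rsum (fun k => rsum (fun i => if S k i then c i * xs i else 0) n) m
   <= rsum (fun i => c i * xs i) n.
Proof.
  intros Hm. destruct Hfam as [Hv [_ [Hdis _]]].
  rewrite <- (rsum_single n 1 (c 1%nat * xs 1%nat)) by lia.
  rewrite <- rsum_exch, <- rsum_plus. apply rsum_le. intros i Hi.
  destruct (pw_groups S K (c i * xs i) i m Hm) as [E|[E [k [Hk Hs]]]].
  { intros k l Hk Hl Hkl. apply Hdis; auto. }
  - rewrite E.
    destruct (Nat.eqb_spec i 1). subst; lra. pose proof (Lcx i Hi). lra.
  - rewrite E.
    destruct (Nat.eqb_spec i 1). subst. pose proof (Hv k 1%nat ltac:(lia) Hs). lia. lra.
Qed.

Lemma Lhbound h lose : (1<=h<=K)%nat -> S h lose = true -> INR h * c lose <= rsum (fun i => c i * xs i) n.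
Proof.
  intros Hh Hl. pose proof (Ldecomp (h - 1) ltac:(lia)) as HD.
  destruct Hfam as [Hv _]. pose proof (Hv h lose Hh Hl) as Hlr.
  destruct F0 as [H1 _]. rewrite H1, Hc1 in HD.
  assert (Hcl : 0 <= c lose <= 1) by (split; [apply Hc0; lia| apply Lc1; lia]).
  assert (rsum (fun _ => c lose) (h - 1) <= rsum (fun k => rsum (fun i => if S k i then c i * xs i else 0) n) (h - 1)).
  { apply rsum_le. intros k Hk. eapply Rle_trans; [|apply (Lgroup_ge k (c lose))].
    pose proof (Lset_ge1 k ltac:(lia)). nra.
    intros i Hi. apply (Lchain h lose Hh Hl (h - 1 - k) k); auto; lia. }
  rewrite rsum_const in H.
  replace (INR h) with (INR (h - 1) + 1) by (rewrite <- S_INR; f_equal; lia). lra.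
Qed.

Lemma Lcost1 : 1 <= rsum (fun i => c i * xs i) n.
Proof.
  pose proof (Ldecomp 0 ltac:(lia)). destruct F0 as [H1 _]. rewrite H1, Hc1 in H. simpl rsum in H. lra.
Qed.

Lemma Lfrac_cov i : (1<=i<=n)%nat -> frac i -> (2<=i)%nat /\ covered K S Sinf i.
Proof.
  intros Hi Hf. destruct F0 as [H1 [_ [_ [Hu _]]]].
  destruct (Nat.eq_dec i 1). subst; lra.
  split. lia. apply NNPP; intros Hc. rewrite (Hu i ltac:(lia) Hc) in Hf. lra.
Qed.

Lemma Lq d : (d <= Dbound eps)%nat -> 1 <= (1 + eps) ^ d <= 1 + 2 * eps * INR d /\ eps * INR d <= 1/2.
Proof.
  intros Hd. apply le_INR in Hd. pose proof (Dbound_small eps Heps).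
  assert (eps * INR d <= 1/2) by (pose proof (pos_INR d); nra).
  split; [split|auto]. apply pow_R1_Rle; lra. apply pow_bound; lra.
Qed.

Local Notation Goal := (exists xb : nat -> R,
    inP eps n w b K S Sinf rho xb /\
    (forall i, (1 <= i <= n)%nat -> xb i = 0 \/ xb i = 1) /\
    rsum (fun i => c i * xb i) n <= (1 + 2 * eps) * rsum (fun i => c i * xs i) n).

Local Notation FracH := (forall h, (1 <= h <= K)%nat ->
       (exists i, S h i = true /\ 0 < xs i < 1) ->
       exists d : nat, (d <= Nat.min h (Dbound eps))%nat /\
         forall i j, S h i = true -> S h j = true -> c i <= (1 + eps) ^ d * c j).

Lemma round_none : (forall i, (1<=i<=n)%nat -> ~ frac i) -> Goal.
Proof.
  intros H. exists xs. split; [apply F0|split]. intros i Hi; apply Fint; auto.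
  pose proof Lcost1. nra.
Qed.

Lemma round_loose j : FracH -> (1<=j<=n)%nat -> frac j -> loose j -> Goal.
Proof.
  intros Hfrac Hj Hf Hl. pose proof (loose_unique j Hj Hf Hl) as Huq.
  pose proof F0 as [H1 [Hw [Hg [Hu Hb]]]].
  pose proof Hfam as [Hv [Hvi [Hdis Hdis2]]].
  destruct (Lfrac_cov j Hj Hf) as [Hj2 Hcov].
  set (cost := rsum (fun i => c i * xs i) n).
  pose proof Lcost1 as Hc1'. fold cost in Hc1'.
  assert (Hcj : c j <= 2 * eps * cost).
  { destruct Hl as [Hs|[k [Hk [Hs Hnt]]]].
    - destruct Hord as [_ Hb2]. destruct (Hb2 j Hs) as [Hce _]. nra.
    - destruct (Hfrac k Hk (ex_intro _ j (conj Hs Hf))) as [d [Hd Hcd]].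
      destruct (Lq d ltac:(lia)) as [[Hq1 Hq2] Hed].
      set (q := (1+eps)^d) in *.
      assert (Hm : forall i, S k i = true -> c j / q <= c i).
      { intros i Hi. pose proof (Hcd j i Hs Hi). fold q in H.
        apply Rmult_le_reg_r with q; [lra|]. replace (c j / q * q) with (c j) by (field; lra). lra. }
      pose proof (Lgroup_ge k (c j / q) Hm). pose proof (Lgroup_le k). fold cost in H0.
      assert (Hr : rho k = Nceil eps).
      { destruct (Hg k Hk) as [Hlt _]. destruct (Hrho k Hk).
        destruct (Nat.eq_dec (rho k) (Nceil eps)); auto. exfalso; apply Hnt; apply Hlt; lia. }
      pose proof (Lset_ge k Hk). rewrite Hr in H2. pose proof (Nceil_ge eps ltac:(lra)).
      assert (HX : 0 <= c j / q). { unfold Rdiv. apply Rmult_le_pos; [apply Hc0; lia| left; apply Rinv_0_lt_compat; lra]. }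
      assert (c j / q * / eps <= cost) by nra.
      assert (c j / q <= eps * cost).
      { apply Rmult_le_reg_r with (/ eps). apply Rinv_0_lt_compat; lra.
        replace (eps * cost * / eps) with cost by (field; lra). lra. }
      replace (c j) with (q * (c j / q)) by (field; lra).
      assert (q * (c j / q) <= q * (eps * cost)) by (apply Rmult_le_compat_l; lra).
      nra. }
  exists (fun i => if Nat.eqb i j then 1 else xs i).
  split; [|split].
  - unfold inP. cbv beta. split; [|split; [|split; [|split]]].
    + destruct (Nat.eqb_spec 1 j); [lia|]. auto.
    + rewrite rsum_mul_upd by auto. pose proof (Hw0 j Hj). nra.
    + intros k Hk. rewrite setsum_upd by auto. destruct (S k j) eqn:E.
      * assert (Hnt : ~ tight k).
        { destruct Hl as [Hs|[k' [Hk' [Hs Hnt]]]]. exfalso; eapply Hdis2; eauto.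
          destruct (Nat.eq_dec k k'). subst; auto. exfalso; eapply Hdis; eauto. }
        destruct (Hg k Hk) as [Hlt Hge]. split.
        intros Hr. exfalso; apply Hnt; auto.
        intros Hr. specialize (Hge Hr). lra.
      * rewrite Rplus_0_r. apply Hg; auto.
    + intros i Hi Hc. destruct (Nat.eqb_spec i j). subst; contradiction. auto.
    + intros i Hi Hc. destruct (Nat.eqb_spec i j). lra. auto.
  - intros i Hi. destruct (Nat.eqb_spec i j). right; auto. apply Fint; auto.
  - rewrite rsum_mul_upd by auto. fold cost. pose proof (Hc0 j Hj). nra.
Qed.

Lemma round_pair win lose h : FracH -> (1<=win<=n)%nat -> (1<=lose<=n)%nat -> win <> lose ->
  (1<=h<=K)%nat -> S h win = true -> S h lose = true -> tight h -> frac win -> frac lose ->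
  w lose <= w win -> xs win + xs lose = 1 ->
  (forall i, (1<=i<=n)%nat -> i <> win -> i <> lose -> ~ frac i) -> Goal.
Proof.
  intros Hfrac Hwin Hlose Hne Hh Hsw Hsl Ht Hfw Hfl Hww Hsum Huq.
  pose proof F0 as [H1 [Hw [Hg [Hu Hb]]]].
  pose proof Hfam as [Hv [Hvi [Hdis Hdis2]]].
  destruct (Lfrac_cov win Hwin Hfw) as [Hw2 Hcw].
  destruct (Lfrac_cov lose Hlose Hfl) as [Hl2 Hcl].
  set (cost := rsum (fun i => c i * xs i) n).
  exists (fun i => if Nat.eqb i lose then 0 else if Nat.eqb i win then 1 else xs i).
  split; [|split].
  - unfold inP. cbv beta. split; [|split; [|split; [|split]]].
    + destruct (Nat.eqb_spec 1 lose); [lia|]. destruct (Nat.eqb_spec 1 win); [lia|]. auto.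
    + rewrite rsum_mul_upd2 by auto. nra.
    + intros k Hk. rewrite setsum_upd2 by auto.
      assert (E : setsum n (S k) xs + (if S k win then 1 - xs win else 0) + (if S k lose then 0 - xs lose else 0)
                  = setsum n (S k) xs).
      { destruct (Nat.eq_dec k h). subst. rewrite Hsw, Hsl. lra.
        destruct (S k win) eqn:E1. exfalso; eapply (Hdis k h); eauto.
        destruct (S k lose) eqn:E2. exfalso; eapply (Hdis k h); eauto. lra. }
      rewrite E. apply Hg; auto.
    + intros i Hi Hc. destruct (Nat.eqb_spec i lose). subst; contradiction.
      destruct (Nat.eqb_spec i win). subst; contradiction. auto.
    + intros i Hi Hc. destruct (Nat.eqb_spec i lose). lra. destruct (Nat.eqb_spec i win). lra. auto.
  - intros i Hi. destruct (Nat.eqb_spec i lose). left; auto. destruct (Nat.eqb_spec i win). right; auto.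
    apply Fint; auto.
  - rewrite rsum_mul_upd2 by auto. fold cost.
    destruct (Hfrac h Hh (ex_intro _ win (conj Hsw Hfw))) as [d [Hd Hcd]].
    destruct (Lq d ltac:(lia)) as [[Hq1 Hq2] Hed].
    set (q := (1+eps)^d) in *.
    pose proof (Hcd win lose Hsw Hsl) as Hcwl. fold q in Hcwl.
    pose proof (Lhbound h lose Hh Hsl) as Hhb. fold cost in Hhb.
    assert (Hdh : INR d <= INR h) by (apply le_INR; lia).
    pose proof (Hc0 lose Hlose). pose proof (Hc0 win Hwin).
    assert (I1 : c win * (1 - xs win) + c lose * (0 - xs lose) = xs lose * (c win - c lose)) by (replace (1 - xs win) with (xs lose) by lra; ring).
    assert (I2 : xs lose * (c win - c lose) <= (q - 1) * c lose).
    { destruct (Rle_dec (c win) (c lose)). assert ((q-1) * c lose >= 0) by nra. nra.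
      assert (xs lose * (c win - c lose) <= c win - c lose) by nra. nra. }
    assert (I3 : (q - 1) * c lose <= 2 * eps * INR d * c lose) by nra.
    assert (I4 : 2 * eps * INR d * c lose <= 2 * eps * INR h * c lose).
    { apply Rmult_le_compat_r; auto. nra. }
    assert (I5 : 2 * eps * INR h * c lose <= 2 * eps * cost) by nra.
    lra.
Qed.

Lemma main : FracH -> Goal.
Proof.
  intros Hfrac.
  destruct (classic (exists i, (1<=i<=n)%nat /\ frac i)) as [[j [Hj Hf]]|Hno].
  - destruct (Fclass j Hj Hf) as [Hl|[h [Hh [Hs Ht]]]].
    + apply (round_loose j); auto.
    + destruct (other_frac h j Hh Ht Hj Hs Hf) as [j' [Hj' [Hne [Hs' Hf']]]].
      assert (Hu := tight_unique j j' h Hj Hj' Hh (not_eq_sym Hne) Hs Hs' Hf Hf').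
      assert (Hsum := pair_sum h j j' Hh Ht Hj Hj' (not_eq_sym Hne) Hs Hs' Hf Hf' Hu).
      destruct (Rle_dec (w j') (w j)).
      * apply (round_pair j j' h); auto.
      * apply (round_pair j' j h); auto; try lra.
  - apply round_none. intros i Hi Hf. apply Hno; eauto.
Qed.
End Main.

Theorem lemma3 (n : nat) (c w : nat -> R) (b eps : R) (K : nat)
    (S : nat -> nat -> bool) (Sinf : nat -> bool) (rho : nat -> nat) (xs : nat -> R)
    (Hn : (1 <= n)%nat)
    (Hc1 : c 1%nat = 1)
    (Hcdec : forall i, (1 <= i)%nat -> (i + 1 <= n)%nat -> c (i + 1)%nat <= c i)
    (Hc0 : forall i, (1 <= i <= n)%nat -> 0 <= c i)
    (Hw0 : forall i, (1 <= i <= n)%nat -> 0 <= w i)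
    (Heps : 0 < eps <= 1 / 256)
    (Hfam : valid_family n K S Sinf)
    (Hord : eps_c_ordered eps c K S Sinf)
    (Hrho : forall k, (1 <= k <= K)%nat -> (1 <= rho k <= Nceil eps)%nat)
    (Hext : extreme_point eps n w b K S Sinf rho xs)
    (Hfrac : forall h, (1 <= h <= K)%nat ->
       (exists i, S h i = true /\ 0 < xs i < 1) ->
       exists d : nat, (d <= Nat.min h (Dbound eps))%nat /\
         forall i j, S h i = true -> S h j = true -> c i <= (1 + eps) ^ d * c j) :
  exists xb : nat -> R,
    inP eps n w b K S Sinf rho xb /\
    (forall i, (1 <= i <= n)%nat -> xb i = 0 \/ xb i = 1) /\
    rsum (fun i => c i * xb i) n <= (1 + 2 * eps) * rsum (fun i => c i * xs i) n.
Proof.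
  eapply main; eauto.
Qed.
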